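(* Regard $Y$ as a representation of the mirabolic group $P$ through the middle action $\tau$. Then the natural map $\Phi^+\Phi^-Y\to Y$ (the counit of the adjunction $\Phi^+\dashv\Phi^-$) is injective, and its image is the subspace $Y^\circ=S(\mathrm{GL}_2(F)\times F^\times)\subseteq Y$ of functions supported on $\mathrm{GL}_2(F)\times F^\times$.
   Context: Let $F$ be a non-Archimedean local field with $\mathrm{char}(F)\neq2$, and put $G=\mathrm{GL}_2(F)$. Fix a non-trivial character $e$ of $F$. $P=\left\{\begin{pmatrix}a&b\\&1\end{pmatrix}\right\}\subseteq G$ is the mirabolic subgroup, $U=\left\{\begin{pmatrix}1&b\\&1\end{pmatrix}\right\}$, and $\theta\left(\begin{pmatrix}1&b\\&1\end{pmatrix}\right)=e(b)$. $\Phi^-\colon\mathrm{Mod}(P)\to\mathrm{Vect}$ sends a smooth $P$-module $M$ to its quotient by the span of $\pi(u)m-\theta(u)m$ ($u\in U$), and $\Phi^+$ is its left adjoint (in the sense of Bernstein–Zelevinsky; $\Phi^+\mathbb C\cong S(F^\times)$). $Y=S(M_2(F)\times F^\times)$ carries the middle $G$-action $\tau$ coming from the Weil representation. On $P$ it is given by $\tau\begin{pmatrix}a&b\\&1\end{pmatrix}\Psi(g,y)=|a|e(b\det(g)y)\Psi(g,ay)$, and $\tau\begin{pmatrix}&-1\\1&\end{pmatrix}\Psi(g,y)=|y|^2\int_{M_2(F)}\Psi(h,y)e(-y\langle g,h\rangle)\,dh$, where $\langle m,m'\rangle=\mathrm{tr}\,m\,\mathrm{tr}\,m'-\mathrm{tr}(mm')$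 and $dh$ is self-dual. *)

(* Defs.v *)
From mathcomp Require Import all_boot all_order all_algebra.
Set Implicit Arguments. Unset Strict Implicit. Unset Printing Implicit Defensive.
Import Order.TTheory GRing.Theory Num.Theory.
Local Open Scope ring_scope.

Section LocalField.
Variables (F : fieldType) (q : nat) (v : F -> int).

Definition vge (x : F) (n : int) : Prop := x = 0 \/ n <= v x.

(* F is a non-Archimedean local field with normalized discrete valuation v
   (onto Z) and residue field of cardinality q: i.e. F is complete for a
   discrete valuation and has finite residue field F_q. *)
Definition nonarch_local_field : Prop :=
  [/\ (1 < q)%N,
      (forall x y, x != 0 -> y != 0 -> v (x * y) = v x + v y) /\
      (forall x y, x != 0 -> y != 0 -> x + y != 0 -> Num.min (v x) (v y) <= v (x + y)),
      (exists pi : F, pi != 0 /\ v pi = 1),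
      (exists r : seq F,
          [/\ size r = q, uniq r, (forall x, x \in r -> vge x 0),
              (forall x y, x \in r -> y \in r -> x != y -> ~ vge (x - y) 1)
            & (forall x, vge x 0 -> exists2 y, y \in r & vge (x - y) 1)])
    & (forall s : nat -> F,
          (forall N : int, exists n0, forall m n, (n0 <= m)%N -> (n0 <= n)%N ->
              vge (s m - s n) N) ->
          exists l, forall N : int, exists n0, forall n, (n0 <= n)%N -> vge (s n - l) N)].

Variable C : numClosedFieldType.

Definition absF (a : F) : C := (q%:R : C) ^ (- v a).

Definition nontriv_char (e : F -> C) : Prop :=
  [/\ (forall x y, e (x + y) = e x * e y),
      (exists x, e x != 1)
    & (exists N : int, forall x, vge x N -> e x = 1)].

Variable e : F -> C.

Definition Yfun := 'M[F]_2 -> F -> C.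

(* Psi in Y = S(M_2(F) x F^x) (extended by zero at y = 0):
   compactly supported in M_2(F) x F^x and locally constant. *)
Definition inY (Psi : Yfun) : Prop :=
  exists N : int,
    (forall (g : 'M[F]_2) y, Psi g y != 0 ->
       [/\ forall i j, vge (g i j) (- N), y != 0 & - N <= v y <= N]) /\
    (forall (g g' : 'M[F]_2) y y', (forall i j, vge (g i j - g' i j) N) -> vge (y - y') N ->
       Psi g y = Psi g' y').

(* Y° = S(GL_2(F) x F^x) inside Y: support bounded away from det g = 0. *)
Definition inYo (Psi : Yfun) : Prop :=
  inY Psi /\ exists N : int, forall (g : 'M[F]_2) y, Psi g y != 0 ->
     \det g != 0 /\ v (\det g) <= N.

(* the middle action tau of p = [[a, b], [0, 1]] (a <> 0) *)
Definition tauP (a b : F) (Psi : Yfun) : Yfun :=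
  fun g y => absF a * e (b * \det g * y) * Psi g (a * y).

(* Y(U, theta) = span { tau(u) Psi - theta(u) Psi : u in U, Psi in Y } *)
Definition inYUth (f : Yfun) : Prop :=
  exists s : seq (F * Yfun),
    foldr (fun p P => inY p.2 /\ P) True s /\
    (forall (g : 'M[F]_2) y, f g y = \sum_(p <- s) (tauP 1 p.1 p.2 g y - e p.1 * p.2 g y)).

(* Phi^- Y = Y / Y(U,theta).  Phi^+ V = c-ind_U^P (theta (x) V), realized as
   S(F^x, V) via phi(a) = f(diag(a,1)), with P-action
   ([[a',b'],[0,1]] . phi)(a) = e(a b') phi(a a').
   Elements of Phi^+ Phi^- Y are represented by maps phi : F -> Y
   (values at a <> 0 matter), taken modulo Y(U,theta) pointwise. *)
Definition inPPY (phi : F -> Yfun) : Prop :=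
  [/\ forall a, a != 0 -> inY (phi a),
      (exists N : int, forall a, a != 0 -> ~ (- N <= v a <= N) -> inYUth (phi a))
    & (exists N : int, forall a a', a != 0 -> a' != 0 -> vge (a - a') N ->
          inYUth (fun g y => phi a g y - phi a' g y))].

Definition eqvPPY (phi phi' : F -> Yfun) : Prop :=
  forall a, a != 0 -> inYUth (fun g y => phi a g y - phi' a g y).

Definition actPP (a' b' : F) (phi : F -> Yfun) : F -> Yfun :=
  fun a g y => e (a * b') * phi (a * a') g y.

(* eps is (a representative of) the counit Phi^+ Phi^- Y -> Y of the
   adjunction Phi^+ -| Phi^-: a well-defined, linear, P-equivariant map whose
   adjunct  V = Phi^- Y -> Phi^- Phi^+ Phi^- Y -> Phi^- Y  is the identity,
   where the unit V ~= Phi^- Phi^+ V is inverse to evaluation at a = 1. *)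
Definition is_counit (eps : (F -> Yfun) -> Yfun) : Prop :=
  [/\ (forall phi, inPPY phi -> inY (eps phi)) /\
      (forall phi phi', inPPY phi -> inPPY phi' -> eqvPPY phi phi' -> eps phi = eps phi'),
      (forall phi phi', inPPY phi -> inPPY phi' ->
          eps (fun a g y => phi a g y + phi' a g y) =
          (fun g y => eps phi g y + eps phi' g y)),
      (forall (c : C) phi, inPPY phi ->
          eps (fun a g y => c * phi a g y) = (fun g y => c * eps phi g y)),
      (forall a' b' phi, a' != 0 -> inPPY phi ->
          eps (actPP a' b' phi) = tauP a' b' (eps phi))
    & (forall phi, inPPY phi -> inYUth (fun g y => eps phi g y - phi 1 g y))].

End LocalField.

(* Main.v *)
Require Import Defs.
From mathcomp Require Import all_boot all_order all_algebra zify ring.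
From Stdlib Require Import ClassicalEpsilon Classical FunctionalExtensionality.
Set Implicit Arguments. Unset Strict Implicit. Unset Printing Implicit Defensive.
Import Order.TTheory GRing.Theory Num.Theory.
Local Open Scope ring_scope.

Ltac vlia := repeat match goal with
  | H : ?T |- _ => lazymatch type of T with Prop => idtac end;
      lazymatch T with
      | forall _ : _, _ => clear H
      | context [@Order.le _ _ _ _] => fail
      | context [@Order.lt _ _ _ _] => fail
      | context [leq _ _] => fail
      | @eq int _ _ => fail
      | @eq nat _ _ => fail
      | _ => clear H
      end
  end; lia.

Lemma det2 (R : comRingType) (g : 'M[R]_2) : \det g = g 0 0 * g 1 1 - g 0 1 * g 1 0.
Proof.
rewrite (expand_det_row _ 0) !big_ord_recl big_ord0 addr0 /cofactor !det_mx11.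
rewrite /= !mxE /= expr0 expr1 mul1r mulN1r mulrN.
have -> : lift 0 0 = 1 :> 'I_2 by apply/val_inj.
have -> : lift 1 0 = 0 :> 'I_2 by apply/val_inj.
by [].
Qed.

Section Val.
Variables (F : fieldType) (v : F -> int).
Implicit Types (x y z a b c s t : F) (m n : int).
Hypothesis vM : forall x y : F, x != 0 -> y != 0 -> v (x * y) = v x + v y.
Hypothesis vU : forall x y : F, x != 0 -> y != 0 -> x + y != 0 ->
  Num.min (v x) (v y) <= v (x + y).

Lemma v1 : v 1 = 0.
Proof. have h1 : (1 : F) != 0 by rewrite oner_neq0.
have := vM h1 h1; rewrite mulr1; vlia. Qed.

Lemma vNeg1 : v (-1) = 0.
Proof.
have h : (-1 : F) != 0 by rewrite oppr_eq0 oner_neq0.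
have := vM h h; rewrite mulrNN mulr1 v1; vlia.
Qed.

Lemma vN x : x != 0 -> v (- x) = v x.
Proof.
move=> hx; have h : (-1 : F) != 0 by rewrite oppr_eq0 oner_neq0.
by rewrite -mulN1r vM // vNeg1 add0r.
Qed.

Lemma vV x : x != 0 -> v x^-1 = - v x.
Proof.
move=> hx; have hi : x^-1 != 0 by rewrite invr_eq0.
have := vM hx hi; rewrite mulfV // v1; vlia.
Qed.

Lemma vge0 n : vge v 0 n. Proof. by left. Qed.

Lemma vgeP x n : x != 0 -> vge v x n <-> n <= v x.
Proof. by move=> hx; split => [[/eqP h|//]|h]; [rewrite h in hx | right]. Qed.

Lemma vge_le x m n : vge v x n -> m <= n -> vge v x m.
Proof. by move=> [->|h] hmn; [left|right; vlia]. Qed.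

Lemma vgeN x n : vge v x n -> vge v (- x) n.
Proof.
move=> [->|h]; first by left; rewrite oppr0.
case: (eqVneq x 0) => [->|hx]; first by left; rewrite oppr0.
by right; rewrite vN.
Qed.

Lemma vgeD x y n : vge v x n -> vge v y n -> vge v (x + y) n.
Proof.
move=> [->|hx]; first by rewrite add0r.
move=> [->|hy]; first by rewrite addr0; right.
case: (eqVneq x 0) => [->|nx]; first by rewrite add0r; right.
case: (eqVneq y 0) => [->|ny]; first by rewrite addr0; right.
case: (eqVneq (x + y) 0) => [->|nxy]; first by left.
right; have := vU nx ny nxy; vlia.
Qed.

Lemma vgeB x y n : vge v x n -> vge v y n -> vge v (x - y) n.
Proof. by move=> hx hy; apply: vgeD => //; apply: vgeN. Qed.

Lemma vgeM x y m n : vge v x m -> vge v y n -> vge v (x * y) (m + n).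
Proof.
move=> [->|hx]; first by rewrite mul0r; left.
move=> [->|hy]; first by rewrite mulr0; left.
case: (eqVneq x 0) => [->|nx]; first by rewrite mul0r; left.
case: (eqVneq y 0) => [->|ny]; first by rewrite mulr0; left.
by right; rewrite vM //; vlia.
Qed.

Lemma vge_sym x y n : vge v (x - y) n -> vge v (y - x) n.
Proof. by move=> /vgeN; rewrite opprB. Qed.

Lemma vge_trans x y z n : vge v (x - y) n -> vge v (y - z) n -> vge v (x - z) n.
Proof. by move=> h1 h2; have := vgeD h1 h2; rewrite addrA subrK. Qed.

Lemma vge_refl x n : vge v (x - x) n.
Proof. by rewrite subrr; left. Qed.

Lemma v_add_eq x y : x != 0 -> vge v y (v x + 1) -> x + y != 0 /\ v (x + y) = v x.
Proof.
move=> hx hy.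
have nxy : x + y != 0.
  apply/eqP => h; have hyx : y = - x by apply/eqP; rewrite -addr_eq0 addrC h.
  move: hy; rewrite hyx => [[/eqP|]]; first by rewrite oppr_eq0 (negPf hx).
  rewrite vN //; vlia.
split=> //.
have h1 : vge v (x + y) (v x) by apply: vgeD; [right|apply: (vge_le hy); vlia].
move/(vgeP _ nxy): h1 => h1.
suff : ~ (v x + 1 <= v (x + y)) by vlia.
move=> h2; have : vge v ((x + y) - y) (v x + 1) by apply: vgeB => //; right.
by rewrite addrK => /(vgeP _ hx); vlia.
Qed.

Lemma vge_close_same x y n : x != 0 -> v x < n -> vge v (x - y) n -> y != 0 /\ v y = v x.
Proof.
move=> hx hvx h.
have : vge v (- (x - y)) (v x + 1) by apply: vgeN; apply: (vge_le h); vlia.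
move=> /(v_add_eq hx); by rewrite opprB addrC subrK.
Qed.

Variables (pi : F).
Hypotheses (hpi0 : pi != 0) (hpi1 : v pi = 1).

Lemma pi_unit : pi \is a GRing.unit. Proof. by rewrite unitfE. Qed.

Lemma vexpn (k : nat) : pi ^+ k != 0 /\ v (pi ^+ k) = k.
Proof.
elim: k => [|k [h1 h2]]; first by rewrite expr0 oner_neq0 v1.
by rewrite exprS mulf_neq0 // vM // h2 hpi1; split => //; vlia.
Qed.

Lemma pz_neq0 (z : int) : pi ^ z != 0.
Proof. exact: expfz_neq0. Qed.

Lemma vpz (z : int) : v (pi ^ z) = z.
Proof.
case: z => k /=.
  by have [_ ->] := vexpn k.
have [h1 h2] := vexpn k.+1; rewrite vV // h2; vlia.
Qed.

Variables (q : nat) (r : seq F).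
Hypotheses (q1 : (1 < q)%N) (rsize : size r = q) (runiq : uniq r)
  (r0 : forall x, x \in r -> vge v x 0)
  (rdist : forall x y, x \in r -> y \in r -> x != y -> ~ vge v (x - y) 1)
  (rcov : forall x, vge v x 0 -> exists2 y, y \in r & vge v (x - y) 1).
Variables (C : numClosedFieldType) (e : F -> C).
Hypotheses (eD : forall x y, e (x + y) = e x * e y) (enon : exists x, e x != 1)
  (esm : exists N : int, forall x, vge v x N -> e x = 1).

Lemma e0 : e 0 = 1.
Proof. by have [N hN] := esm; apply: hN; left. Qed.

Lemma eNe x : e (- x) * e x = 1.
Proof. by rewrite -eD addNr e0. Qed.

Lemma e_neq0 x : e x != 0.
Proof. by apply/eqP => h; have := eNe x; rewrite h mulr0 => /eqP; rewrite eq_sym oner_eq0. Qed.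

Lemma sharp : exists n0 : int, (forall x, vge v x n0 -> e x = 1) /\
  exists x, vge v x (n0 - 1) /\ e x != 1.
Proof.
apply: NNPP => H.
have step : forall n, (forall x, vge v x n -> e x = 1) -> (forall x, vge v x (n - 1) -> e x = 1).
  move=> n Pn x hx; apply: NNPP => hne; apply: H; exists n; split => //.
  by exists x; split => //; apply/eqP.
have [N hN] := esm; have [x0 hx0] := enon.
have Pk : forall k : nat, forall x, vge v x (N - k%:Z) -> e x = 1.
  elim=> [|k IH]; first by move=> x; rewrite subr0; apply: hN.
  move=> x hx; apply: (step _ IH); by have -> : N - k%:Z - 1 = N - k.+1%:Z by vlia.
have nx0 : x0 != 0 by apply: contraNneq hx0 => ->; rewrite e0.
move/eqP: hx0; apply; apply: (Pk `|N - v x0|%N); right; vlia.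
Qed.

Variable n0 : int.
Hypotheses (hn0a : forall x, vge v x n0 -> e x = 1)
  (hn0b : exists x, vge v x (n0 - 1) /\ e x != 1).

Lemma charsum_r c : c != 0 -> v c = n0 - 1 -> \sum_(y <- r) e (y * c) = 0.
Proof.
move=> hc hvc.
have [x [hx ex]] := hn0b.
have nx : x != 0 by apply: contraNneq ex => ->; rewrite e0.
have hx' : vge v (x / c) 0.
  right; rewrite vM ?invr_eq0 // vV //; move/(vgeP _ nx): hx; vlia.
have [y0 y0r hy0] := rcov hx'.
have ey0 : e (y0 * c) != 1.
  have -> : y0 * c = x + (y0 - x / c) * c.
    by rewrite mulrBl divfK // addrC subrK.
  rewrite eD (@hn0a ((y0 - x / c) * c)) ?mulr1 //.
  have hc' : vge v c (n0 - 1) by right; rewrite hvc.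
  have := vgeM (vge_sym hy0) hc'.
  by have -> : 1 + (n0 - 1) = n0 by vlia.
pose sig y := epsilon (inhabits 0) (fun z => z \in r /\ vge v (y + y0 - z) 1).
have hsig : forall y, y \in r -> sig y \in r /\ vge v (y + y0 - sig y) 1.
  move=> y yr; apply: (epsilon_spec (inhabits 0) (fun z => z \in r /\ vge v (y + y0 - z) 1)).
  have := rcov (vgeD (r0 yr) (r0 y0r)); by case=> z zr hz; exists z.
have sinj : {in r &, injective sig}.
  move=> a b ar br hab; apply: NNPP => /eqP nab; apply: (rdist ar br nab).
  have [_ h1] := hsig a ar; have [_ h2] := hsig b br.
  have := vgeB h1 h2; rewrite hab.
  by have -> : a + y0 - sig b - (b + y0 - sig b) = a - b by ring.
have perm : perm_eq (map sig r) r.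
  have us : uniq (map sig r) by rewrite map_inj_in_uniq.
  apply: uniq_perm => //.
  have sub : {subset map sig r <= r} by move=> z /mapP [y yr ->]; have [] := hsig y yr.
  have sz : (size r <= size (map sig r))%N by rewrite size_map.
  exact: (uniq_min_size us sub sz).2.
have key : \sum_(y <- r) e (y * c) = e (y0 * c) * \sum_(y <- r) e (y * c).
  rewrite mulr_sumr -{1}(perm_big _ perm) big_map; apply: eq_big_seq => y yr.
  have [_ h] := hsig y yr.
  have e1 : e ((y + y0 - sig y) * c) = 1.
    apply: hn0a; have hc' : vge v c (n0 - 1) by right; rewrite hvc.
    have := vgeM h hc'; by have -> : 1 + (n0 - 1) = n0 by vlia.
  have := eD (sig y * c) ((y + y0 - sig y) * c); rewrite e1 mulr1 => <-.
  by rewrite -eD; congr e; ring.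
apply/eqP; move/eqP: key; rewrite -subr_eq0 -{1}(mul1r (\sum_(y <- r) e (y * c))) -mulrBl.
by rewrite mulf_eq0 subr_eq0 eq_sym (negPf ey0).
Qed.

Fixpoint Bl (M : int) (k : nat) : seq F :=
  if k is k'.+1 then [seq x + y * pi ^ (M + k'%:Z) | x <- Bl M k', y <- r] else [:: 0].

Lemma Bl_size M k : size (Bl M k) = (q ^ k)%N.
Proof. elim: k => [//|k IH] /=; by rewrite size_allpairs IH rsize expnS mulnC. Qed.

Lemma Bl_cover M k x : vge v x M -> exists2 y, y \in Bl M k & vge v (x - y) (M + k%:Z).
Proof.
move=> hx; elim: k => [|k [y yB hy]]; first by exists 0; rewrite ?inE ?subr0 ?addr0.
set p := pi ^ (M + k%:Z).
have hp : p != 0 by apply: pz_neq0.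
have hz : vge v ((x - y) / p) 0.
  case: (eqVneq (x - y) 0) => [->|nd]; first by rewrite mul0r; left.
  right; rewrite vM ?invr_eq0 // vV // vpz; move/(vgeP _ nd): hy; vlia.
have [t tr ht] := rcov hz.
exists (y + t * p); first by apply: allpairs_f.
have -> : x - (y + t * p) = ((x - y) / p - t) * p.
  by rewrite mulrBl divfK //; ring.
have hp' : vge v p (M + k%:Z) by right; rewrite vpz.
have := vgeM ht hp'; by have -> : 1 + (M + k%:Z) = M + k.+1%:Z by vlia.
Qed.

Lemma Bl_sum M k s : s != 0 ->
  (exists2 j : nat, (j < k)%N & v (pi ^ (M + j%:Z) * s) = n0 - 1) ->
  \sum_(b <- Bl M k) e (b * s) = 0.
Proof.
move=> hs; elim: k => [[j]//|k IH [j hj hv]].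
rewrite /= big_allpairs_dep /=.
have -> : \sum_(i1 <- Bl M k) \sum_(i2 <- r) e ((i1 + i2 * pi ^ (M + k%:Z)) * s)
   = (\sum_(i1 <- Bl M k) e (i1 * s)) * \sum_(i2 <- r) e (i2 * (pi ^ (M + k%:Z) * s)).
  rewrite mulr_suml; apply: eq_bigr => i1 _; rewrite mulr_sumr; apply: eq_bigr => i2 _.
  by rewrite mulrDl eD mulrA.
case: (ltngtP j k) => hjk.
- by rewrite IH ?mul0r //; exists j.
- by move: hj; rewrite ltnS leqNgt hjk.
- rewrite charsum_r ?mulr0 //; last by rewrite -hjk.
  by rewrite mulf_neq0 // pz_neq0.
Qed.

Lemma charsum_range lo hi : exists B : seq F, (0 < size B)%N /\
  forall s, s != 0 -> lo <= v s <= hi -> \sum_(b <- B) e (b * s) = 0.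
Proof.
exists (Bl (n0 - 1 - hi) `|hi - lo|.+1); split.
  rewrite Bl_size expn_gt0; vlia.
move=> s hs /andP [h1 h2]; apply: Bl_sum => //.
exists `|hi - v s|%N; first vlia.
rewrite vM ?pz_neq0 // vpz; vlia.
Qed.

Implicit Types (Psi f : Yfun F C) (g : 'M[F]_2).

Definition inYN (N : int) (Psi : Yfun F C) : Prop :=
    (forall (g : 'M[F]_2) y, Psi g y != 0 ->
       [/\ forall i j, vge v (g i j) (- N), y != 0 & - N <= v y <= N]) /\
    (forall (g g' : 'M[F]_2) y y', (forall i j, vge v (g i j - g' i j) N) -> vge v (y - y') N ->
       Psi g y = Psi g' y').

Lemma inYNE Psi : inY v Psi <-> exists N, inYN N Psi.
Proof. by []. Qed.

Lemma inYN_mono N N' Psi : inYN N Psi -> N <= N' -> inYN N' Psi.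
Proof.
move=> [hs hl] hN; split.
  move=> g y /hs [hg hy hv]; split => // [i j|]; last vlia.
  by apply: (vge_le (hg i j)); vlia.
move=> g g' y y' hg hy; apply: hl => [i j|]; apply: vge_le; [exact: hg|vlia|exact: hy|vlia].
Qed.

Lemma inYN_add N Psi1 Psi2 : inYN N Psi1 -> inYN N Psi2 ->
  inYN N (fun g y => Psi1 g y + Psi2 g y).
Proof.
move=> [s1 l1] [s2 l2]; split.
  move=> g y; case: (eqVneq (Psi1 g y) 0) => h1; last by move=> _; apply: s1.
  by rewrite h1 add0r; apply: s2.
by move=> g g' y y' hg hy; rewrite (l1 g g' y y') // (l2 g g' y y').
Qed.

Lemma inYN_scale N (c : C) Psi : inYN N Psi -> inYN N (fun g y => c * Psi g y).
Proof.
move=> [s1 l1]; split.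
  by move=> g y; rewrite mulf_eq0 negb_or => /andP [_ h]; apply: s1.
by move=> g g' y y' hg hy; rewrite (l1 g g' y y').
Qed.

Lemma inY_add Psi1 Psi2 : inY v Psi1 -> inY v Psi2 -> inY v (fun g y => Psi1 g y + Psi2 g y).
Proof.
move=> [N1 h1] [N2 h2]; exists (Num.max N1 N2); apply: inYN_add.
  by apply: (inYN_mono h1); vlia.
by apply: (inYN_mono h2); vlia.
Qed.

Lemma inY_scale (c : C) Psi : inY v Psi -> inY v (fun g y => c * Psi g y).
Proof. by move=> [N h]; exists N; apply: inYN_scale. Qed.

Lemma inY_sub Psi1 Psi2 : inY v Psi1 -> inY v Psi2 -> inY v (fun g y => Psi1 g y - Psi2 g y).
Proof.
move=> h1 h2; have := inY_add h1 (inY_scale (-1) h2).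
have -> // : (fun g y => Psi1 g y + -1 * Psi2 g y) = (fun g y => Psi1 g y - Psi2 g y).
by apply: functional_extensionality => g; apply: functional_extensionality => y; rewrite mulN1r.
Qed.

Definition allY (l : seq (F * Yfun F C)) := foldr (fun p P => inY v p.2 /\ P) True l.

Lemma allY_cat l1 l2 : allY l1 -> allY l2 -> allY (l1 ++ l2).
Proof. by elim: l1 => [//|p l1 IH] /= [h1 h2] h3; split => //; apply: IH. Qed.

Lemma allY_map (h : F * Yfun F C -> F * Yfun F C) l :
  (forall p, inY v p.2 -> inY v (h p).2) -> allY l -> allY (map h l).
Proof. by move=> hf; elim: l => [//|p l IH] /= [h1 h2]; split; [apply: hf|apply: IH]. Qed.

Lemma inYUth_add f1 f2 : inYUth q v e f1 -> inYUth q v e f2 ->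
  inYUth q v e (fun g y => f1 g y + f2 g y).
Proof.
move=> [s1 [a1 h1]] [s2 [a2 h2]]; exists (s1 ++ s2); split; first exact: allY_cat.
by move=> g y; rewrite big_cat h1 h2.
Qed.

Lemma inYUth_scale (c : C) f : inYUth q v e f -> inYUth q v e (fun g y => c * f g y).
Proof.
move=> [s1 [a1 h1]].
exists (map (fun p => (p.1, fun g y => c * p.2 g y)) s1); split.
  by apply: allY_map => // p; apply: inY_scale.
move=> g y; rewrite h1 big_map mulr_sumr; apply: eq_bigr => p _.
by rewrite /tauP /=; ring.
Qed.

Lemma inYUth0 : inYUth q v e (fun _ _ => 0).
Proof. by exists [::]; split => // g y; rewrite big_nil. Qed.

Lemma inYUth_sub f1 f2 : inYUth q v e f1 -> inYUth q v e f2 ->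
  inYUth q v e (fun g y => f1 g y - f2 g y).
Proof.
move=> h1 h2; have := inYUth_add h1 (inYUth_scale (-1) h2).
have -> // : (fun g y => f1 g y + -1 * f2 g y) = (fun g y => f1 g y - f2 g y).
by apply: functional_extensionality => g; apply: functional_extensionality => y; rewrite mulN1r.
Qed.

Lemma absF1 : absF q v C 1 = 1.
Proof. by rewrite /absF v1 oppr0 expr0z. Qed.

Lemma qC_neq0 : (q%:R : C) != 0.
Proof. by rewrite pnatr_eq0; vlia. Qed.

Lemma absF_neq0 a : absF q v C a != 0.
Proof. by apply: expfz_neq0; apply: qC_neq0. Qed.

Lemma absF_mul a b : a != 0 -> b != 0 -> absF q v C (a * b) = absF q v C a * absF q v C b.
Proof.
move=> ha hb; rewrite /absF vM // opprD exprzDr //.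
by rewrite unitfE qC_neq0.
Qed.

Lemma YUth_locus f : inYUth q v e f -> forall g y, \det g * y = 1 -> f g y = 0.
Proof.
move=> [s [_ h]] g y hgy; rewrite h big1 // => p _.
by rewrite /tauP absF1 mul1r -mulrA hgy mulr1 mul1r subrr.
Qed.

Lemma allY_all (h : F -> F * Yfun F C) l :
  (forall b, inY v (h b).2) -> allY (map h l).
Proof. by move=> hf; elim: l => [//|b l IH] /=; split. Qed.

Lemma sum_const_seq (A : C) (l : seq F) : \sum_(b <- l) A = A *+ size l.
Proof. by elim: l => [|b l IH]; rewrite ?big_nil ?big_cons ?IH ?mulrS. Qed.

Lemma vge_det N g : (forall i j, vge v (g i j) (- N)) -> vge v (\det g) (- N + - N).
Proof.
move=> hg; rewrite det2; apply: vgeB; apply: vgeM; exact: hg.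
Qed.

Lemma vanish_YUth Psi : inY v Psi -> (forall g y, \det g * y = 1 -> Psi g y = 0) ->
  inYUth q v e Psi.
Proof.
move=> [N0 hN0] hz.
have hN : inYN (Num.max N0 1) Psi by apply: (inYN_mono hN0); vlia.
have N1 : 1 <= Num.max N0 1 by vlia.
move: (Num.max N0 1) hN N1 => N [hs hl] N1.
have supp : forall g y, Psi g y != 0 ->
    \det g * y - 1 != 0 /\ - (N + N + N) <= v (\det g * y - 1) <= N + N - 1.
  move=> g y hPsi; have [hg hy hv] := hs g y hPsi.
  have nz : \det g * y - 1 != 0.
    by apply: contra hPsi; rewrite subr_eq0 => /eqP /hz ->.
  split => //; apply/andP; split.
    have h1 : vge v (\det g * y) (- N + - N + - N) by apply: vgeM; [apply: vge_det | right; vlia].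
    have h2 : vge v 1 (- N + - N + - N) by right; rewrite v1; vlia.
    by have := vgeB h1 h2 => /(vgeP _ nz); vlia.
  rewrite leNgt; apply/negP => hlt.
  have hv1 : vge v (\det g * y - 1) (v 1 + 1) by right; rewrite v1; vlia.
  have [nt vt] := v_add_eq (oner_neq0 F) hv1.
  rewrite addrC subrK v1 in nt vt.
  have nd : \det g != 0 by apply: contraNneq nt => ->; rewrite mul0r.
  have vd : v (\det g) = - v y by move: vt; rewrite vM //; vlia.
  have hcl : vge v (y - (\det g)^-1) N.
    have -> : y - (\det g)^-1 = (\det g * y - 1) * (\det g)^-1.
      by rewrite mulrBl mul1r mulrAC mulfV // mul1r.
    have hi : vge v (\det g)^-1 (- N) by right; rewrite vV // vd; vlia.
    have ht : vge v (\det g * y - 1) (N + N) by right; vlia.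
    have := vgeM ht hi.
    by have -> : N + N + - N = N by vlia.
  move/eqP: hPsi; apply; rewrite (hl g g y (\det g)^-1) //; last by move=> i j; apply: vge_refl.
  by apply: hz; rewrite mulfV.
have [B [hB hBs]] := charsum_range (- (N + N + N)) (N + N - 1).
pose w := ((size B)%:R : C)^-1.
exists (map (fun b => (b, fun g y => - w * e (- b) * Psi g y)) B); split.
  by apply: allY_all => b /=; apply: inY_scale; exists N.
move=> g y; rewrite big_map /=.
have term : forall b, tauP q v e 1 b (fun g y => - w * e (- b) * Psi g y) g y -
      e b * (- w * e (- b) * Psi g y)
    = w * Psi g y - w * Psi g y * e (b * (\det g * y - 1)).
  move=> b; rewrite /tauP absF1 mul1r mul1r.
  have -> : e (b * (\det g * y - 1)) = e (b * \det g * y) * e (- b).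
    by rewrite -eD; congr e; ring.
  have hb : e b * e (- b) = 1 by rewrite mulrC eNe.
  rewrite (_ : e b * (- w * e (- b) * Psi g y) = - w * Psi g y * (e b * e (- b))); last by ring.
  rewrite hb; ring.
rewrite (eq_bigr _ (fun b _ => term b)) sumrB sum_const_seq -mulr_sumr.
case: (eqVneq (Psi g y) 0) => [->|hP]; first by rewrite !mulr0 mul0r mul0rn subr0.
have [nz hr] := supp g y hP.
rewrite hBs // mulr0 subr0.
rewrite -mulr_natr /w mulrAC mulVf ?mul1r // pnatr_eq0; vlia.
Qed.

Lemma actPP0 t phi : actPP e t 0 phi = (fun a => phi (a * t)).
Proof.
apply: functional_extensionality => a; apply: functional_extensionality => g.
apply: functional_extensionality => y; by rewrite /actPP mulr0 e0 mul1r.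
Qed.

Lemma inPPY_act t phi : t != 0 -> inPPY q v e phi -> inPPY q v e (actPP e t 0 phi).
Proof.
move=> ht [h1 [N2 h2] [N3 h3]]; rewrite actPP0; split.
- by move=> a ha; apply: h1; rewrite mulf_neq0.
- exists (N2 + `|v t|%:Z) => a ha hr; apply: h2; first by rewrite mulf_neq0.
  rewrite vM //; vlia.
- exists (N3 - v t) => a a' ha ha' hv; apply: h3; rewrite ?mulf_neq0 //.
  have := vgeM hv (_ : vge v t (v t)); rewrite -mulrBl.
  have -> : N3 - v t + v t = N3 by vlia.
  by apply; right.
Qed.

Lemma counit_formula eps phi g y : is_counit q v e eps -> inPPY q v e phi ->
  \det g != 0 -> y != 0 ->
  eps phi g y = (absF q v C (\det g * y))^-1 * phi (\det g * y) g (\det g)^-1.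
Proof.
move=> [[h1a h1b] h2 h3 h4 h5] hphi nd ny.
set t := \det g * y.
have ht : t != 0 by rewrite mulf_neq0.
have E := h4 t 0 phi ht hphi.
have L := YUth_locus (h5 _ (inPPY_act ht hphi)) (mulfV nd).
move: L; rewrite E /tauP /actPP !mul0r !mulr0 e0 mulr1 mul1r.
have -> : t * (\det g)^-1 = y by rewrite /t mulrAC mulfV // mul1r.
rewrite mul1r; move/eqP; rewrite subr_eq0 => /eqP <-.
by rewrite mulrA mulVf ?mul1r // absF_neq0.
Qed.

Lemma phi_far phi N2 : inPPY q v e phi ->
  (forall a, a != 0 -> ~ (- N2 <= v a <= N2) -> inYUth q v e (phi a)) ->
  forall a g, a != 0 -> \det g != 0 -> ~ (- N2 <= v a <= N2) -> phi a g (\det g)^-1 = 0.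
Proof.
move=> _ h2 a g ha nd hr; apply: (YUth_locus (h2 a ha hr)).
by rewrite mulfV.
Qed.

Lemma det_shift g s : \det (g + s%:M) = \det g + s * (s + (g 0 0 + g 1 1)).
Proof. rewrite !det2 !mxE /=. ring. Qed.

Lemma shift_close g s N : vge v s N -> forall i j, vge v (g i j - (g + s%:M) i j) N.
Proof.
move=> hs i j; rewrite !mxE opprD addrA subrr add0r; apply: vgeN.
by case: (i == j); rewrite ?mulr1n ?mulr0n //; left.
Qed.

Lemma counit_zero eps phi g y : is_counit q v e eps -> inPPY q v e phi ->
  \det g * y = 0 -> eps phi g y = 0.
Proof.
move=> hc hphi hdy.
have hc' := hc; move: hc' => [[h1a _] _ _ _ _].
have [_ [N2 h2] _] := hphi.
have [N1' hN1'] := h1a phi hphi.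
have hN1 : inYN (Num.max N1' 0) (eps phi) by apply: (inYN_mono hN1'); vlia.
have N0 : 0 <= Num.max N1' 0 by vlia.
move: (Num.max N1' 0) hN1 N0 => N1 [hs hl] N0.
apply: NNPP => /eqP hne; have [hg hy hv] := hs g y hne.
have nd : \det g = 0 by move/eqP: hdy; rewrite mulf_eq0 (negPf hy) orbF => /eqP.
set m : int := N1 + N1 + N1 + `|N2|%:Z + 1.
have hm : m = N1 + N1 + N1 + `|N2|%:Z + 1 by [].
clearbody m.
set tr := g 0 0 + g 1 1.
have [s [hs0 hsm hstr hsv]] : exists s, [/\ s != 0, vge v s N1, s + tr != 0 & m <= v s].
  case: (eqVneq (pi ^ m + tr) 0) => h.
    exists (pi ^ (m + 1)); split; first exact: pz_neq0.
    - by right; rewrite vpz; vlia.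
    - apply/eqP => h'; have : pi ^ m = pi ^ (m + 1).
        by move/eqP: h; move/eqP: h'; rewrite !addr_eq0 => /eqP -> /eqP ->.
      by move/(congr1 v); rewrite !vpz; vlia.
    - by rewrite vpz; vlia.
  exists (pi ^ m); split => //; first exact: pz_neq0.
    by right; rewrite vpz; vlia.
  by rewrite vpz; vlia.
pose g' := g + s%:M.
have hd' : \det g' = s * (s + tr) by rewrite /g' det_shift nd add0r.
have nd' : \det g' != 0 by rewrite hd' mulf_neq0.
have htr : vge v (s + tr) (- N1).
  apply: vgeD; last by apply: vgeD; apply: hg.
  by apply: (vge_le hsm); vlia.
have ht' : ~ (- N2 <= v (\det g' * y) <= N2).
  rewrite vM // hd' vM //; move/(vgeP _ hstr): htr; vlia.
have z' : eps phi g' y = 0.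
  rewrite (counit_formula hc hphi nd' hy) (phi_far hphi h2) ?mulr0 //.
  by rewrite mulf_neq0.
move/eqP: hne; apply; rewrite -z'; apply: hl; last by apply: vge_refl.
exact: shift_close.
Qed.

Lemma locus_y g y : \det g * y = 1 -> \det g != 0 /\ y = (\det g)^-1.
Proof.
move=> h; have nd : \det g != 0 by apply: contra_eq_neq h => ->; rewrite mul0r eq_sym oner_neq0.
by split => //; apply: (mulfI nd); rewrite h mulfV.
Qed.

Lemma counit_Yo eps phi : is_counit q v e eps -> inPPY q v e phi -> inYo v (eps phi).
Proof.
move=> hc hphi; have hc' := hc; move: hc' => [[h1a _] _ _ _ _].
have [_ [N2 h2] _] := hphi.
have [N1 [hs hl]] := h1a phi hphi.
split; first by exists N1.
exists (N2 + N1) => g y hne; have [hg hy hv] := hs g y hne.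
have nd : \det g != 0.
  by apply: contraNneq hne => hd; apply/eqP; apply: (counit_zero hc hphi); rewrite hd mul0r.
split => //.
move: hne; rewrite (counit_formula hc hphi nd hy).
case: (boolP (- N2 <= v (\det g * y) <= N2)) => [/andP [_ ht]|/negP ht].
  by move=> _; move: ht; rewrite vM //; vlia.
by rewrite (phi_far hphi h2) ?mulr0 ?eqxx // mulf_neq0.
Qed.

Lemma counit_inj eps phi phi' : is_counit q v e eps -> inPPY q v e phi -> inPPY q v e phi' ->
  eps phi = eps phi' -> eqvPPY q v e phi phi'.
Proof.
move=> hc hp hp' E a ha.
have [hp1 _ _] := hp; have [hp1' _ _] := hp'.
apply: vanish_YUth; first by apply: inY_sub; [apply: hp1|apply: hp1'].
move=> g y /locus_y [nd ->].
have ny : a * (\det g)^-1 != 0 by rewrite mulf_neq0 ?invr_eq0.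
have := congr1 (fun f => f g (a * (\det g)^-1)) E => /=.
rewrite (counit_formula hc hp nd ny) (counit_formula hc hp' nd ny).
rewrite mulrCA mulfV // mulr1 => /mulfI -> //; first by rewrite subrr.
by rewrite invr_eq0 absF_neq0.
Qed.

Definition phiPsi Psi : F -> Yfun F C := fun a g y => absF q v C a * Psi g (a * y).

Lemma inY_dil a Psi : a != 0 -> inY v Psi -> inY v (fun g y => Psi g (a * y)).
Proof.
move=> ha [N [hs hl]]; exists (N + `|v a|%:Z); split.
  move=> g y /hs [hg hy hv]; split.
  - by move=> i j; apply: (vge_le (hg i j)); vlia.
  - by apply: contraNneq hy => ->; rewrite mulr0.
  - have ny : y != 0 by apply: contraNneq hy => ->; rewrite mulr0.
    move: hv; rewrite vM //; vlia.
move=> g g' y y' hg hy; apply: hl.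
  by move=> i j; apply: (vge_le (hg i j)); vlia.
have := vgeM (or_intror (lexx _) : vge v a (v a)) hy; rewrite -mulrBr => h.
by apply: (vge_le h); vlia.
Qed.

Lemma inPPY_phiPsi Psi : inYo v Psi -> inPPY q v e (phiPsi Psi).
Proof.
move=> [[N' hN'] [No hNo]].
have hN : inYN (Num.max N' 0) Psi by apply: (inYN_mono hN'); vlia.
have N0 : 0 <= Num.max N' 0 by vlia.
move: (Num.max N' 0) hN N0 => N hN N0; have [hs hl] := hN.
have hY : forall a, a != 0 -> inY v (phiPsi Psi a).
  by move=> a ha; apply: inY_scale; apply: inY_dil => //; exists N.
have bnd : forall a g y, a != 0 -> \det g * y = 1 -> Psi g (a * y) != 0 ->
    [/\ - (N + N + N) <= v a <= N + No, \det g != 0, y = (\det g)^-1 & - No <= v y].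
  move=> a g y ha /locus_y [nd ->] hP.
  have [hg hy hv] := hs _ _ hP; have [_ hd] := hNo _ _ hP.
  have hd2 : vge v (\det g) (- N + - N) by apply: vge_det.
  move/(vgeP _ nd): hd2 => hd2.
  move: hv; rewrite vM ?invr_eq0 // vV // => hv.
  by split => //; vlia.
split => //.
- exists (N + N + N + `|No|%:Z) => a ha hr; apply: vanish_YUth; first exact: hY.
  move=> g y hgy; rewrite /phiPsi.
  case: (eqVneq (Psi g (a * y)) 0) => [->|hP]; first by rewrite mulr0.
  by have [] := bnd a g y ha hgy hP; vlia.
- exists (N + N + `|No|%:Z + 1) => a a' ha ha' hv; apply: vanish_YUth.
    by apply: inY_sub; apply: hY.
  move=> g y hgy; rewrite /phiPsi.
  have key : forall a a', a != 0 -> vge v (a - a') (N + N + `|No|%:Z + 1) ->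
      Psi g (a * y) != 0 -> absF q v C a * Psi g (a * y) = absF q v C a' * Psi g (a' * y).
    move=> b b' hb hbb hP; have [hvb nd hy0 hvy] := bnd b g y hb hgy hP.
    have hvb' : v b < N + N + `|No|%:Z + 1 by vlia.
    have [nb' vb'] := vge_close_same hb hvb' hbb.
    rewrite /absF vb'; congr (_ * _); apply: hl => [i j|]; first by apply: vge_refl.
    have ny : y != 0 by rewrite hy0 invr_eq0.
    have := vgeM hbb (or_intror hvy : vge v y (- No)); rewrite -mulrBl => h.
    by apply: (vge_le h); vlia.
  case: (eqVneq (Psi g (a * y)) 0) => hP.
    case: (eqVneq (Psi g (a' * y)) 0) => hP'; first by rewrite hP hP' !mulr0 subrr.
    by rewrite (key a' a) ?subrr //; apply: vge_sym.
  by rewrite (key a a') ?subrr.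
Qed.

Lemma eps_phiPsi eps Psi : is_counit q v e eps -> inYo v Psi -> eps (phiPsi Psi) = Psi.
Proof.
move=> hc hY; have hp := inPPY_phiPsi hY.
apply: functional_extensionality => g; apply: functional_extensionality => y.
case: (eqVneq (\det g * y) 0) => ht.
  rewrite (counit_zero hc hp ht); apply/esym; apply/eqP; apply: contraT => hP.
  have [[N [hs _]] [No hNo]] := hY; have [_ hy _] := hs _ _ hP; have [nd _] := hNo _ _ hP.
  by move/eqP: ht; rewrite mulf_eq0 (negPf nd) (negPf hy).
have nd : \det g != 0 by apply: contraNneq ht => ->; rewrite mul0r.
have ny : y != 0 by apply: contraNneq ht => ->; rewrite mulr0.
rewrite (counit_formula hc hp nd ny) /phiPsi mulrA mulVf ?absF_neq0 // mul1r.
by rewrite mulrAC mulfV // mul1r.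
Qed.

Definition eps0 (phi : F -> Yfun F C) : Yfun F C := fun g y =>
  if \det g * y == 0 then 0
  else (absF q v C (\det g * y))^-1 * phi (\det g * y) g (\det g)^-1.

Lemma bound_seq (h : F -> int) (l : seq F) : exists B, 0 <= B /\ forall x, x \in l -> h x <= B.
Proof.
elim: l => [|x l [B [hB IH]]]; first by exists 0.
exists (Num.max (h x) B); split; first vlia.
move=> z; rewrite inE => /orP [/eqP ->|/IH]; vlia.
Qed.

Lemma det_close K N g g' : (forall i j, vge v (g i j) (- K)) -> (forall i j, vge v (g' i j) (- K)) ->
  (forall i j, vge v (g i j - g' i j) N) -> vge v (\det g - \det g') (N + - K).
Proof.
move=> hg hg' hc; rewrite !det2.
have -> : g 0 0 * g 1 1 - g 0 1 * g 1 0 - (g' 0 0 * g' 1 1 - g' 0 1 * g' 1 0) =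
  (g 0 0 - g' 0 0) * g 1 1 + g' 0 0 * (g 1 1 - g' 1 1)
  - ((g 0 1 - g' 0 1) * g 1 0 + g' 0 1 * (g 1 0 - g' 1 0)) by ring.
apply: vgeB; apply: vgeD; try (apply: vgeM; [exact: hc | exact: hg]).
all: by apply: (vge_le (vgeM (hg' _ _) (hc _ _))); vlia.
Qed.

Lemma eps0_local (phi : F -> Yfun F C) (N2 L Nb N : int) : 0 <= Nb -> `|N2|%:Z < L ->
  N = Nb + Nb + Nb + Nb + `|N2|%:Z + L + 1 ->
  (forall t rho g, t != 0 -> rho != 0 -> vge v (t - rho) L -> \det g != 0 ->
    phi t g (\det g)^-1 = phi rho g (\det g)^-1) ->
  (forall g y, eps0 phi g y != 0 -> exists rho,
    [/\ rho != 0, \det g * y != 0, \det g != 0 & y != 0] /\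
    [/\ - N2 <= v (\det g * y) <= N2, vge v (\det g * y - rho) L,
        eps0 phi g y = (absF q v C (\det g * y))^-1 * phi rho g (\det g)^-1,
        phi rho g (\det g)^-1 != 0 & inYN Nb (phi rho)]) ->
  inYN N (eps0 phi).
Proof.
move=> Nb0 HL hN same nz.
have claim : forall g g' y y', eps0 phi g y != 0 -> (forall i j, vge v (g i j - g' i j) N) ->
    vge v (y - y') N -> eps0 phi g y = eps0 phi g' y'.
  move=> g g' y y' hne hc hy.
  have [rho [[nr nt nd ny] [hr hrho E hP [hs hl]]]] := nz g y hne.
  have [hg hy0 hv0] := hs _ _ hP; rewrite vV // in hv0.
  have hg' : forall i j, vge v (g' i j) (- Nb).
    move=> i j; have := vgeB (hg i j) (vge_le (hc i j) (_ : - Nb <= N)).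
    by rewrite opprB addrC subrK; apply; vlia.
  have hdd := det_close hg hg' hc.
  have hvd : v (\det g) < N + - Nb by vlia.
  have [nd' vd'] := vge_close_same nd hvd hdd.
  have vy : v y = v (\det g * y) - v (\det g) by rewrite vM //; vlia.
  have hvL : v (\det g * y) < L by move/andP: hr => [_ ?]; vlia.
  have htt : vge v (\det g * y - \det g' * y') L.
    have -> : \det g * y - \det g' * y' = (\det g - \det g') * y + \det g' * (y - y') by ring.
    have hyb : vge v y (- (`|N2|%:Z + Nb)) by right; move/andP: hr => [? _]; vlia.
    have hdb : vge v (\det g') (- Nb) by right; vlia.
    apply: vgeD; first by apply: (vge_le (vgeM hdd hyb)); vlia.
    by apply: (vge_le (vgeM hdb hy)); vlia.
  have [nt' vt'] := vge_close_same nt hvL htt.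
  have hrho' : vge v (\det g' * y' - rho) L := vge_trans (vge_sym htt) hrho.
  have E' : eps0 phi g' y' = (absF q v C (\det g' * y'))^-1 * phi (\det g' * y') g' (\det g')^-1.
    by rewrite /eps0 (negPf nt').
  rewrite E E' (same _ rho g' nt' nr hrho' nd') /absF vt'; congr (_ * _).
  apply: hl; first by move=> i j; apply: (vge_le (hc i j)); vlia.
  have -> : (\det g)^-1 - (\det g')^-1 = (\det g' - \det g) * ((\det g)^-1 * (\det g')^-1).
    by rewrite mulrBl mulrCA mulfV // mulr1 mulrA mulfV // mul1r.
  have hi : vge v (\det g)^-1 (- Nb) by right; rewrite vV //; vlia.
  have hi' : vge v (\det g')^-1 (- Nb) by right; rewrite vV //; vlia.
  by apply: (vge_le (vgeM (vge_sym hdd) (vgeM hi hi'))); vlia.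
split.
  move=> g y hne; have [rho [[nr nt nd ny] [hr hrho E hP [hs hl]]]] := nz g y hne.
  have [hg hy0 hv0] := hs _ _ hP; rewrite vV // in hv0.
  have vy : v y = v (\det g * y) - v (\det g) by rewrite vM //; vlia.
  split => // [i j|]; first by apply: (vge_le (hg i j)); vlia.
  move/andP: hr => [? ?]; vlia.
move=> g g' y y' hc hy.
case: (eqVneq (eps0 phi g y) 0) => h; last exact: claim.
case: (eqVneq (eps0 phi g' y') 0) => h'; first by rewrite h h'.
apply/esym; apply: claim => // [i j|]; last by apply: vge_sym.
by apply: vge_sym.
Qed.

Lemma eps0_inY phi : inPPY q v e phi -> inY v (eps0 phi).
Proof.
move=> hphi; have [h1 [N2 h2] [N3 h3]] := hphi.
pose L := Num.max N3 (`|N2|%:Z + 1).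
have HL : N3 <= L /\ `|N2|%:Z < L by rewrite /L; vlia.
clearbody L.
pose M := - `|N2|%:Z; pose k := `|L - M|%N.
have hMk : M + k%:Z = L by rewrite /k /M; vlia.
pose R := Bl M k.
have cover : forall t, - N2 <= v t -> t != 0 -> exists2 rho, rho \in R & vge v (t - rho) L.
  move=> t ht nt; rewrite -hMk; apply: Bl_cover; right; rewrite /M; vlia.
pose NN a := epsilon (inhabits 0) (fun N => a != 0 -> inYN N (phi a)).
have hNN : forall a, a != 0 -> inYN (NN a) (phi a).
  move=> a; apply: (epsilon_spec (inhabits 0) (fun N => a != 0 -> inYN N (phi a))).
  case: (eqVneq a 0) => [->|ha]; first by exists 0.
  by have [N hN] := h1 a ha; exists N.
have [Nb [Nb0 hNb]] := bound_seq NN R.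
have repY : forall rho, rho \in R -> rho != 0 -> inYN Nb (phi rho).
  by move=> rho hr hn; apply: (inYN_mono (hNN rho hn)); apply: hNb.
have same : forall t rho g, t != 0 -> rho != 0 -> vge v (t - rho) L -> \det g != 0 ->
    phi t g (\det g)^-1 = phi rho g (\det g)^-1.
  move=> t rho g nt nr htr nd; apply/eqP; rewrite -subr_eq0; apply/eqP.
  apply: (YUth_locus (h3 t rho nt nr (vge_le htr (proj1 HL)))).
  by rewrite mulfV.
have nz : forall g y, eps0 phi g y != 0 -> exists rho,
    [/\ rho != 0, \det g * y != 0, \det g != 0 & y != 0] /\
    [/\ - N2 <= v (\det g * y) <= N2, vge v (\det g * y - rho) L,
        eps0 phi g y = (absF q v C (\det g * y))^-1 * phi rho g (\det g)^-1,
        phi rho g (\det g)^-1 != 0 & inYN Nb (phi rho)].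
  move=> g y; rewrite /eps0; case: (eqVneq (\det g * y) 0) => [->|nt]; first by rewrite eqxx.
  move=> /= hne.
  have nd : \det g != 0 by apply: contraNneq nt => ->; rewrite mul0r.
  have ny : y != 0 by apply: contraNneq nt => ->; rewrite mulr0.
  have hr : - N2 <= v (\det g * y) <= N2.
    apply: contraNT hne => /negP hr.
    by rewrite (phi_far hphi h2) ?mulr0.
  have [rho rR hrho] := cover _ (proj1 (andP hr)) nt.
  have hvL : v (\det g * y) < L by move/andP: hr => [_ ?]; vlia.
  have [nr vr] := vge_close_same nt hvL hrho.
  exists rho; split; first by [].
  have E := same _ rho g nt nr hrho nd.
  rewrite E in hne; split => //; first by rewrite E.
    by move: hne; rewrite mulf_eq0 negb_or => /andP [].
  exact: repY.
exists (Nb + Nb + Nb + Nb + `|N2|%:Z + L + 1).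
apply: (eps0_local Nb0 (proj2 HL) (erefl _) same nz).
Qed.

Lemma eps0_counit : is_counit q v e eps0.
Proof.
split.
- split; first by move=> phi; apply: eps0_inY.
  move=> phi phi' hp hp' heq.
  apply: functional_extensionality => g; apply: functional_extensionality => y.
  rewrite /eps0; case: ifP => // /negbT nt; congr (_ * _).
  have nd : \det g != 0 by apply: contraNneq nt => ->; rewrite mul0r.
  apply/eqP; rewrite -subr_eq0; apply/eqP; apply: (YUth_locus (heq _ nt)).
  by rewrite mulfV.
- move=> phi phi' _ _.
  apply: functional_extensionality => g; apply: functional_extensionality => y.
  by rewrite /eps0; case: ifP => _; [rewrite addr0 | rewrite mulrDr].
- move=> c phi _.
  apply: functional_extensionality => g; apply: functional_extensionality => y.
  by rewrite /eps0; case: ifP => _; [rewrite mulr0 | rewrite mulrCA].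
- move=> a' b' phi ha _.
  apply: functional_extensionality => g; apply: functional_extensionality => y.
  rewrite /eps0 /tauP /actPP.
  have -> : \det g * (a' * y) = \det g * y * a' by ring.
  rewrite [\det g * y * a' == 0]mulf_eq0 (negPf ha) orbF.
  case: ifP => [_|/negbT nt]; first by rewrite !mulr0.
  rewrite (absF_mul nt ha) invfM.
  have -> : b' * \det g * y = \det g * y * b' by ring.
  have hA : absF q v C a' * (absF q v C a')^-1 = 1 by rewrite mulfV ?absF_neq0.
  rewrite [RHS]mulrA [in RHS](mulrC _ ((absF q v C (\det g * y))^-1 * _)) -!mulrA.
  by rewrite (mulrA _ (absF q v C a')) (mulrC _ (absF q v C a')) hA mul1r mulrCA.
- move=> phi hphi; have [h1 _ _] := hphi.
  apply: vanish_YUth.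
    by apply: inY_sub; [exact: eps0_inY | apply: h1; exact: oner_neq0].
  move=> g y hgy; have [nd hy] := locus_y hgy.
  by rewrite /eps0 hgy oner_eq0 /= absF1 invr1 mul1r -hy subrr.
Qed.

Lemma main : (exists eps, is_counit q v e eps) /\
  (forall eps, is_counit q v e eps ->
     (forall phi phi', inPPY q v e phi -> inPPY q v e phi' ->
        eps phi = eps phi' -> eqvPPY q v e phi phi') /\
     (forall Psi : Yfun F C,
        inYo v Psi <-> exists2 phi, inPPY q v e phi & eps phi = Psi)).
Proof.
split; first by exists eps0; exact: eps0_counit.
move=> eps hc; split; first by move=> phi phi' hp hp' E; exact: counit_inj hc hp hp' E.
move=> Psi; split.
  by move=> hY; exists (phiPsi Psi); [exact: inPPY_phiPsi hY | exact: eps_phiPsi hc hY].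
by case=> phi hp <-; apply: counit_Yo.
Qed.

End Val.

Theorem lemma2p17 (F : fieldType) (q : nat) (v : F -> int)
  (hF : nonarch_local_field q v) (hchar : ~~ (2%N \in [pchar F]))
  (C : numClosedFieldType) (e : F -> C) (he : nontriv_char v e) :
  (exists eps, is_counit q v e eps) /\
  (forall eps, is_counit q v e eps ->
     (forall phi phi', inPPY q v e phi -> inPPY q v e phi' ->
        eps phi = eps phi' -> eqvPPY q v e phi phi') /\
     (forall Psi : Yfun F C,
        inYo v Psi <-> exists2 phi, inPPY q v e phi & eps phi = Psi)).
Proof.
have [q1 [vM vU] [pi [hpi0 hpi1]] [r [rsize runiq r0 rdist rcov]] _] := hF.
have [eD enon esm] := he.
have [n0 [hn0a hn0b]] := sharp hpi1 q1 rsize enon esm.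
exact: (main vM vU hpi0 hpi1 q1 rsize runiq r0 rdist rcov eD esm hn0a hn0b).
Qed.
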